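(* Let $\alpha \ge 2$ be a constant and let $\gamma = 226\alpha$. Let $S$ be a set of $n$ distinct totally ordered elements. Let $A$ be a sequence of $m \ge \max\{64, \sqrt{n}\}$ elements chosen uniformly at random from $S$ without replacement (arranged in some order), and let $B$ be a set of at most $m$ elements chosen uniformly at random without replacement from $S \setminus A$. Let $d$ be an integer with $\max\{\mathrm{disl}(A), \log n\} \le d \le \frac{\sqrt{n}}{2160\alpha}$ and, for each $x \in B$, let $r_x \in \{1,\dots,m\}$ be an integer with $|r_x - \mathrm{rank}(x,A)| \le \alpha d$. Then the sequence $\widetilde{S}$ obtained by simultaneously inserting each element $x \in B$ into position $r_x$ of $A$ (breaking ties arbitrarily) has maximum dislocation at most $\gamma d$ with probability at least $1 - O(n^{-3})$.
   Context: For a set or sequence $T$ and an element $x$: $\mathrm{rank}(x,T) = 1 + |\{y\in T : y < x\}|$. For a sequence $T$ and $y \in T$, the dislocation of $y$ is $|\mathrm{pos}(y,T) - \mathrm{rank}(y,T)|$, where $\mathrm{pos}(y,T)$ is the position of $y$ in $T$; $\mathrm{disl}(T)$ is the maximum dislocation over elements of $T$. $\log$ is the binary logarithm. In the paper $\alpha$ is the constant from the noisy binary search theorem (depending only on the comparison error bound $p$). *)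

(* Defs.v *)
From Stdlib Require Import Reals.
From mathcomp Require Import all_boot.
Local Open Scope R_scope.

Set Implicit Arguments.
Unset Strict Implicit.
Unset Printing Implicit Defensive.

(* The ground set S of n distinct totally ordered elements is modelled by 'I_n
   with its natural order (any finite totally ordered set is order-isomorphic). *)

Definition rank {n : nat} (x : 'I_n) (T : seq 'I_n) : nat :=
  (count (fun y : 'I_n => (y < x)%N) T).+1.

Definition pos {n : nat} (y : 'I_n) (T : seq 'I_n) : nat := (index y T).+1.

Definition absdiff (a b : nat) : nat := maxn (a - b) (b - a).

Definition dislocation {n : nat} (y : 'I_n) (T : seq 'I_n) : nat :=
  absdiff (pos y T) (rank y T).

Definition disl {n : nat} (T : seq 'I_n) : nat :=
  \max_(y <- T) dislocation y T.

Definition log2 (x : R) : R := (ln x / ln 2).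

(* T is obtained from the sequence A by simultaneously inserting each x in B
   into position r x of A, ties broken arbitrarily: T is a permutation of
   A ++ B, the elements of A appear in T in the same order as in A, and each
   x in B is placed immediately before the (r x)-th element of A, i.e. exactly
   (r x - 1) elements of A precede x in T. *)
Definition is_insertion {n : nat} (A : seq 'I_n) (B : {set 'I_n})
    (r : 'I_n -> nat) (T : seq 'I_n) : Prop :=
  [/\ perm_eq T (A ++ enum B),
      [seq y <- T | y \in A] = A &
      forall x, x \in B ->
        count (fun y => y \in A) (take (index x T) T) = (r x).-1].

(* Drawing A uniformly without replacement and then B uniformly
   without replacement from S \ A is exactly the uniform distribution on this
   finite set. *)
Definition Omega (n m k : nat) : {set {set 'I_n} * {set 'I_n}} :=
  [set p : {set 'I_n} * {set 'I_n} | (#|p.1| == m) && (#|p.2| == k) && [disjoint p.1 & p.2]].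

Definition good_event (alpha : R) (n m d : nat) (As Bs : {set 'I_n}) : Prop :=
  forall (A : seq 'I_n) (r : 'I_n -> nat) (T : seq 'I_n),
    perm_eq A (enum As) ->
    (disl A <= d)%N ->
    (forall x, x \in Bs ->
       (1 <= r x <= m)%N /\
       (Rabs (INR (r x) - INR (rank x A)) <= alpha * INR d)) ->
    is_insertion A Bs r T ->
    (INR (disl T) <= (226 * alpha) * INR d).

(* Main.v *)
Require Import Defs.
From Stdlib Require Import Reals.
From Stdlib Require Import Lia Lra ZArith.
From mathcomp Require Import all_boot.
From mathcomp Require Import zify.

Set Implicit Arguments.
Unset Strict Implicit.
Unset Printing Implicit Defensive.

Lemma bin_half a m : a.+1 <= m.*2 -> 2 * 'C(a, m) <= 'C(a.+1, m).
Proof.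
case: m => [|m]; first by rewrite double0.
move=> H; rewrite binS mul2n -addnn leq_add2l.
have := mul_bin_left a m.
move=> E.
rewrite -(leq_pmul2l (ltn0Sn m)) E.
apply: leq_mul => //.
rewrite doubleS in H. rewrite leq_subLR. lia.
Qed.

Lemma bin_halves m N L : 0 < m -> N <= m.*2 -> 2 ^ L * 'C(N - L, m) <= 'C(N, m).
Proof.
move=> m0 HN; elim: L => [|L IH]; first by rewrite subn0 mul1n.
rewrite expnSr -mulnA; apply: leq_trans IH; rewrite leq_pmul2l ?expn_gt0 //.
case E: (N - L) => [|a].
  have -> : N - L.+1 = 0 by lia.
  by rewrite bin0n; case: m m0 {HN}.
have -> : N - L.+1 = a by lia.
apply: bin_half; lia.
Qed.

Lemma expn_mono a b e : a <= b -> a ^ e <= b ^ e.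
Proof. by move=> h; elim: e => [|e IH] //; rewrite !expnS leq_mul. Qed.

Lemma bin_8W W : 'C(W + 7 * W, 7 * W) <= 2 ^ (5 * W).
Proof.
have H := expnDn 1 7 (W + 7 * W).
have T : 'C(W + 7 * W, 7 * W) * (1 ^ (W + 7 * W - 7 * W) * 7 ^ (7 * W)) <= (1 + 7) ^ (W + 7 * W).
  rewrite H.
  have hi : 7 * W < (W + 7 * W).+1 by lia.
  rewrite (bigD1 (Ordinal hi)) //=. exact: leq_addr.
rewrite exp1n mul1n in T.
have h7 : 2 ^ 19 <= 7 ^ 7.
  have -> : 19 = 8 + 11 by [].
  have -> : 7 = 3 + 4 by [].
  rewrite expnD expnD. apply: leq_mul. by []. by [].
have h7W : 2 ^ (19 * W) <= 7 ^ (7 * W).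
  rewrite expnM [7 ^ (7 * W)]expnM. exact: expn_mono h7.
have e8 : (1 + 7) ^ (W + 7 * W) = 2 ^ (19 * W) * 2 ^ (5 * W).
  rewrite -expnD. have -> : 1 + 7 = 2 ^ 3 by []. rewrite -expnM. congr (_ ^ _). lia.
rewrite e8 in T.
have T2 : 'C(W + 7 * W, 7 * W) * 2 ^ (19 * W) <= 2 ^ (19 * W) * 2 ^ (5 * W).
  apply: leq_trans T. by rewrite leq_mul2l h7W orbT.
by rewrite mulnC leq_pmul2l ?expn_gt0 in T2.
Qed.
Definition cnt {n : nat} (X : {set 'I_n}) (u v : nat) : nat :=
  #|[set x in X | u <= x <= v]|.

Definition goodb {n : nat} (W L : nat) (p : {set 'I_n} * {set 'I_n}) : bool :=
  [forall u : 'I_n, forall v : 'I_n, (cnt p.1 u v <= W) ==> (cnt p.2 u v < L)].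

Definition Ebad (n m k s L : nat) (u v : 'I_n) : {set {set 'I_n} * {set 'I_n}} :=
  [set p in Omega n m k | (cnt (p.1 :|: p.2) u v <= s) && (L <= cnt p.2 u v)].

Lemma card_bigcup_leq (T I : finType) (P : pred I) (F : I -> {set T}) :
  #|\bigcup_(i | P i) F i| <= \sum_(i | P i) #|F i|.
Proof.
apply: (big_ind2 (fun (A : {set T}) n => #|A| <= n)) => //; first by rewrite cards0.
move=> A a B b HA HB; apply: leq_trans (leq_add HA HB).
by rewrite cardsU leq_subr.
Qed.

Lemma inOmega n m k (p : {set 'I_n} * {set 'I_n}) :
  p \in Omega n m k -> [/\ #|p.1| = m, #|p.2| = k & [disjoint p.1 & p.2]].
Proof. by rewrite inE => /andP [/andP [/eqP -> /eqP ->] ->]. Qed.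

Lemma inOmega' n m k (A B : {set 'I_n}) :
  (#|A| == m) && (#|B| == k) && [disjoint A & B] -> [/\ #|A| = m, #|B| = k & [disjoint A & B]].
Proof. by move=> /andP [/andP [/eqP -> /eqP ->] ->]. Qed.

Lemma fiber_omega n m k (U : {set 'I_n}) : #|U| = m + k ->
  'C(m + k, m) <= #|[set p in Omega n m k | p.1 :|: p.2 == U]|.
Proof.
move=> HU.
rewrite -HU -cards_draws.
rewrite -(@card_in_imset _ _ (fun A => (A, U :\: A))); last first.
  by move=> A B _ _ [].
apply: subset_leq_card; apply/subsetP => q /imsetP [A]; rewrite inE => /andP [sAU /eqP cA] ->.
rewrite !inE /= cA eqxx /=.
rewrite cardsD (setIidPr sAU) HU cA addKn eqxx /=.
have -> : A :|: U :\: A = U by apply/setP => x; rewrite !inE; case: (boolP (x \in A)) (subsetP sAU x) => //= _ ->.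
rewrite eqxx andbT.
by rewrite disjoint_subset; apply/subsetP => x xA; rewrite !inE xA.
Qed.

Lemma count_card (T : finType) (s : seq T) (P : pred T) : uniq s ->
  count P s = #|[set x | (x \in s) && P x]|.
Proof.
move=> us; rewrite -size_filter.
have /card_uniqP <- : uniq (filter P s) by exact: filter_uniq.
by apply: eq_card => x; rewrite !inE mem_filter andbC.
Qed.

Lemma fiber_E n m k s L (u v : 'I_n) (U : {set 'I_n}) :
  #|[set p in Ebad m k s L u v | p.1 :|: p.2 == U]| <= 'C(s, L) * 'C(m + k - L, m).
Proof.
set F := [set p in _ | _].
case: (set_0Vmem F) => [->|[p0 Hp0]]; first by rewrite cards0.
set I := [set x in U | u <= x <= v].
have [HU HI] : #|U| = m + k /\ #|I| <= s.
  move: Hp0; rewrite !inE => /andP [/andP [Hom /andP [Hs _]] /eqP HU0].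
  have [c1 c2 dj] := inOmega' Hom.
  split; last by rewrite /I -HU0.
  by rewrite -HU0 cardsU c1 c2; move: dj; rewrite -setI_eq0 => /eqP ->; rewrite cards0 subn0.
set Js := [set J : {set 'I_n} | J \subset I & #|J| == L].
pose G (J : {set 'I_n}) := [set A : {set 'I_n} | A \subset U :\: J & #|A| == m].
have inj : {in F &, injective (fun p : {set 'I_n} * {set 'I_n} => p.1)}.
  move=> [a1 b1] [a2 b2]; rewrite !inE /= => /andP [/andP [H1 _] /eqP E1] /andP [/andP [H2 _] /eqP E2] e.
  subst a2.
  have [_ _ d1] := inOmega' H1; have [_ _ d2] := inOmega' H2.
  congr pair; apply/setP => x; move/setP: E1 => /(_ x); move/setP: E2 => /(_ x).
  rewrite !inE /=.
  case: (boolP (x \in a1)) => xa; last by rewrite /= => -> ->.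
  by rewrite (disjointFr d1 xa) (disjointFr d2 xa).
rewrite -(card_in_imset inj).
apply: leq_trans (_ : #|\bigcup_(J in Js) G J| <= _).
  apply: subset_leq_card; apply/subsetP => A /imsetP [[a b] Hp ->] /=.
  move: Hp; rewrite !inE /= => /andP [/andP [Hom /andP [_ HL]] /eqP HU0].
  have [c1 c2 dj] := inOmega' Hom.
  move: HL => /card_geqP [s0 [us0 ss0 sub0]].
  apply/bigcupP; exists [set x in s0].
    rewrite inE; apply/andP; split.
      apply/subsetP => x; rewrite inE => /sub0; rewrite !inE /= => /andP [xb ->].
      by rewrite -HU0 inE xb orbT.
    by rewrite cardsE (card_uniqP us0) ss0.
  rewrite inE c1 eqxx andbT; apply/subsetP => x xa; rewrite !inE.
  rewrite -HU0 inE xa /= andbT.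
  apply/negP => /sub0; rewrite inE => /andP [xb _].
  by rewrite (disjointFr dj xa) in xb.
apply: leq_trans (card_bigcup_leq _ _) _.
rewrite (eq_bigr (fun _ => 'C(m + k - L, m))); last first.
  move=> J; rewrite inE => /andP [sJ /eqP cJ].
  rewrite /G cards_draws cardsD (setIidPr (subset_trans sJ _)) ?HU ?cJ //.
  by apply/subsetP => x; rewrite inE => /andP [].
rewrite sum_nat_const leq_mul2r; apply/orP; right.
rewrite /Js cards_draws; exact: leq_bin2l.
Qed.

Lemma ivt (g : nat -> nat) L : (forall v, g v.+1 <= (g v).+1) -> g 0 <= 1 -> 0 < L ->
  forall v, L <= g v -> exists2 v', v' <= v & g v' = L.
Proof.
move=> Hs H0 L0; elim=> [|v IH] Hv.
  by exists 0 => //; apply/eqP; rewrite eqn_leq Hv andbT (leq_trans H0 L0).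
case: (leqP L (g v)) => h.
  by case: (IH h) => v' h1 h2; exists v' => //; apply: leq_trans h1 _.
exists v.+1 => //; apply/eqP; rewrite eqn_leq Hv andbT.
exact: leq_trans (Hs v) h.
Qed.

Lemma card_val_le1 n (c : nat) (P : pred 'I_n) : #|[set x : 'I_n | P x & val x == c]| <= 1.
Proof.
apply/card_le1_eqP => x y; rewrite !inE => /andP [_ /eqP hx] /andP [_ /eqP hy].
by apply: val_inj; rewrite hx hy.
Qed.

Lemma cnt_step n (X : {set 'I_n}) u v : cnt X u v.+1 <= (cnt X u v).+1.
Proof.
rewrite /cnt.
apply: leq_trans (_ : #|[set x in X | u <= x <= v] :|: [set x : 'I_n | (x \in X) & val x == v.+1]| <= _).
  apply: subset_leq_card; apply/subsetP => x; rewrite !inE => /andP [xX /andP [h1 h2]].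
  rewrite xX h1 /=; rewrite leq_eqVlt ltnS in h2; by case/orP: h2 => ->; rewrite ?orbT.
rewrite cardsU; apply: leq_trans (leq_subr _ _) _.
by rewrite -[X in _ <= X]addn1 leq_add2l (card_val_le1 _ (mem X)).
Qed.

Lemma cnt0 n (X : {set 'I_n}) u : cnt X u 0 <= 1.
Proof.
rewrite /cnt; apply: leq_trans (card_val_le1 0 (mem X)).
apply: subset_leq_card; apply/subsetP => x; rewrite !inE => /andP [-> /andP [_ h]].
by rewrite leqn0 in h.
Qed.

Lemma cnt_mono n (X : {set 'I_n}) u v v' : v' <= v -> cnt X u v' <= cnt X u v.
Proof.
move=> h; apply: subset_leq_card; apply/subsetP => x; rewrite !inE => /andP [-> /andP [-> h2]].
exact: leq_trans h2 h.
Qed.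

Lemma cntU n (X Y : {set 'I_n}) u v : cnt (X :|: Y) u v <= cnt X u v + cnt Y u v.
Proof.
rewrite /cnt; apply: leq_trans (_ : #|[set x in X | u <= x <= v] :|: [set x in Y | u <= x <= v]| <= _).
  apply: subset_leq_card; apply/subsetP => x; rewrite !inE; case/andP => /orP [h|h] r; apply/orP; [left|right]; by rewrite h r.
by rewrite cardsU leq_subr.
Qed.

Lemma shrink n m k W L (p : {set 'I_n} * {set 'I_n}) : 0 < L ->
  p \in Omega n m k -> ~~ goodb W L p -> exists u, exists v, p \in Ebad m k (W + L) L u v.
Proof.
move=> L0 Hom /forallPn [u] /forallPn [v]; rewrite negb_imply -leqNgt => /andP [hA hB].
have [v' hv' hg] := @ivt (fun v => cnt p.2 u v) L (cnt_step p.2 u) (cnt0 p.2 u) L0 v hB.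
have v'n : v' < n by apply: leq_ltn_trans hv' (ltn_ord v).
exists u, (Ordinal v'n); rewrite inE Hom /= hg leqnn andbT.
apply: leq_trans (cntU _ _ _ _) _; rewrite hg leq_add2r.
exact: leq_trans (cnt_mono _ _ hv') hA.
Qed.

Lemma card_part (P : finType) n (X : {set P}) (f : P -> {set 'I_n}) :
  #|X| = \sum_(U : {set 'I_n}) #|[set p in X | f p == U]|.
Proof.
rewrite -sum1_card (partition_big f predT) //=.
by apply: eq_bigr => U _; rewrite sum1dep_card.
Qed.

Lemma bad_bound n m k W L : 0 < n -> 0 < m -> 0 < L ->
  n ^ 5 * ('C(W + L, L) * 'C(m + k - L, m)) <= 'C(m + k, m) ->
  n ^ 3 * #|[set p in Omega n m k | ~~ goodb W L p]| <= #|Omega n m k|.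
Proof.
move=> n0 m0 L0 Hnum.
have HE : forall u v : 'I_n, n ^ 5 * #|Ebad m k (W + L) L u v| <= #|Omega n m k|.
  move=> u v.
  rewrite (card_part _ (fun p => p.1 :|: p.2)) [X in _ <= X](card_part _ (fun p => p.1 :|: p.2)).
  rewrite big_distrr /=; apply: leq_sum => U _.
  set F := [set p in _ | _].
  case: (set_0Vmem F) => [->|[p0 Hp0]]; first by rewrite cards0 muln0.
  have HU : #|U| = m + k.
    move: Hp0; rewrite !inE => /andP [/andP [Hom _] /eqP HU0].
    have [c1 c2 dj] := inOmega' Hom.
    by rewrite -HU0 cardsU c1 c2; move: dj; rewrite -setI_eq0 => /eqP ->; rewrite cards0 subn0.
  apply: leq_trans (fiber_omega HU).
  apply: leq_trans Hnum; rewrite leq_mul2l; apply/orP; right.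
  exact: fiber_E.
have Hsub : [set p in Omega n m k | ~~ goodb W L p] \subset
    \bigcup_(uv : 'I_n * 'I_n) Ebad m k (W + L) L uv.1 uv.2.
  apply/subsetP => p; rewrite inE => /andP [Hom Hg].
  have [u [v Hp]] := shrink L0 Hom Hg.
  by apply/bigcupP; exists (u, v).
have H1 := leq_trans (subset_leq_card Hsub) (card_bigcup_leq _ _).
have H2 : n ^ 5 * #|[set p in Omega n m k | ~~ goodb W L p]| <= n ^ 2 * #|Omega n m k|.
  apply: leq_trans (_ : n ^ 5 * \sum_(uv : 'I_n * 'I_n) #|Ebad m k (W + L) L uv.1 uv.2| <= _).
    by rewrite leq_mul2l H1 orbT.
  rewrite big_distrr /=.
  apply: leq_trans (_ : \sum_(uv : 'I_n * 'I_n) #|Omega n m k| <= _).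
    by apply: leq_sum => uv _; apply: HE.
  by rewrite sum_nat_const card_prod card_ord.
have e5 : n ^ 5 = n ^ 2 * n ^ 3 by rewrite -expnD.
by move: H2; rewrite e5 -mulnA leq_pmul2l // expn_gt0 n0.
Qed.
Definition rho {n : nat} (As : {set 'I_n}) (z : 'I_n) : nat := #|[set a in As | a < z]|.

Lemma rho_mono n (As : {set 'I_n}) (z z' : 'I_n) : z <= z' -> rho As z <= rho As z'.
Proof.
move=> h; apply: subset_leq_card; apply/subsetP => x; rewrite !inE => /andP [-> h2].
exact: leq_trans h2 h.
Qed.

Lemma rho_lt n (As : {set 'I_n}) (a z : 'I_n) : a \in As -> a < z -> rho As a < rho As z.
Proof.
move=> aA h.
have : #|a |: [set x in As | x < a]| <= rho As z.
  apply: subset_leq_card; apply/subsetP => x; rewrite !inE => /orP [/eqP ->|/andP [-> h2]].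
    by rewrite aA h.
  exact: ltn_trans h2 h.
by rewrite cardsU1 inE ltnn andbF.
Qed.

Lemma rho_inj n (As : {set 'I_n}) (a b : 'I_n) : a \in As -> b \in As -> rho As a = rho As b -> a = b.
Proof.
move=> aA bA e; case: (ltngtP a b) => h.
- by have := rho_lt aA h; rewrite e ltnn.
- by have := rho_lt bA h; rewrite e ltnn.
- exact: val_inj.
Qed.

Lemma window_B n (As Bs : {set 'I_n}) W L R : [disjoint As & Bs] -> goodb W L (As, Bs) -> 0 < L ->
  #|[set z in Bs | R <= rho As z <= R + W]| < L.
Proof.
move=> dj /forallP Hg L0.
set Z := [set z in Bs | _].
case: (set_0Vmem Z) => [->|[z0 z0Z]]; first by rewrite cards0.
case: (@arg_minnP _ z0 (fun i => i \in Z) (fun i : 'I_n => val i) z0Z) => u uZ umin.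
case: (@arg_maxnP _ z0 (fun i => i \in Z) (fun i : 'I_n => val i) z0Z) => v vZ vmax.
have := Hg u => /forallP /(_ v) /implyP /= H.
move: (uZ) (vZ); rewrite !inE => /andP [uB /andP [hu1 hu2]] /andP [vB /andP [hv1 hv2]].
have HA : cnt As u v <= W.
  have : rho As u + cnt As u v <= rho As v.
    rewrite /rho /cnt.
    have dj2 : [disjoint [set a in As | a < u] & [set x in As | u <= x <= v]].
      rewrite -setI_eq0; apply/eqP/setP => x; rewrite !inE.
      by case: (x \in As); case: (ltnP x u); rewrite /= ?andbF.
    move: (dj2); rewrite -setI_eq0 => /eqP e0.
    have <- : #|[set a in As | a < u] :|: [set x in As | u <= x <= v]| = #|[set a in As | a < u]| + #|[set x in As | u <= x <= v]|.
      by rewrite cardsU e0 cards0 subn0.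
    apply: subset_leq_card; apply/subsetP => x; rewrite !inE => /orP [/andP [xA h]|/andP [xA /andP [h1 h2]]].
      by rewrite xA /=; apply: leq_trans h _; apply: leq_trans (umin _ vZ) _.
    rewrite xA /= ltn_neqAle h2 andbT.
    apply/eqP => exv.
    have xv : x = v by apply: val_inj.
    by rewrite xv in xA; rewrite (disjointFr dj xA) in vB.
  lia.
apply: leq_ltn_trans (H HA).
apply: subset_leq_card; apply/subsetP => z zZ; move: (zZ); rewrite !inE => /andP [-> _].
by rewrite umin //; exact: (vmax _ zZ).
Qed.

Lemma window n (As Bs : {set 'I_n}) W L R : [disjoint As & Bs] -> goodb W L (As, Bs) -> 0 < L ->
  #|[set z in As :|: Bs | R <= rho As z <= R + W]| <= W.+1 + L.-1.
Proof.
move=> dj Hg L0.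
apply: leq_trans (_ : #|[set z in As | R <= rho As z <= R + W]| + #|[set z in Bs | R <= rho As z <= R + W]| <= _).
  apply: leq_trans (_ : #|[set z in As | R <= rho As z <= R + W] :|: [set z in Bs | R <= rho As z <= R + W]| <= _).
    apply: subset_leq_card; apply/subsetP => x; rewrite !inE.
    by case/andP => /orP [h|h] r; apply/orP; [left|right]; rewrite h r.
  by rewrite cardsU leq_subr.
apply: leq_add; last by have := window_B R dj Hg L0; case: L L0 {Hg}.
pose f (z : 'I_n) : 'I_W.+1 := inord (rho As z - R).
have inj : {in [set z in As | R <= rho As z <= R + W] &, injective f}.
  move=> a b; rewrite !inE => /andP [aA /andP [a1 a2]] /andP [bA /andP [b1 b2]] /(congr1 val).
  rewrite /f /= !inordK; try lia.
  move=> e; apply: (rho_inj aA bA); lia.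
rewrite -(card_in_imset inj).
by apply: leq_trans (max_card _) _; rewrite card_ord.
Qed.

Lemma count_take_mono (T : Type) (p : pred T) (s : seq T) i j : i <= j ->
  count p (take i s) <= count p (take j s).
Proof.
move=> h; rewrite -(cat_take_drop i (take j s)) take_takel // count_cat.
exact: leq_addr.
Qed.

Lemma absdiff_cat a b c : absdiff (a + b) (a + c) <= maxn b c.
Proof. rewrite /absdiff; lia. Qed.

Lemma split_at n (T : seq 'I_n) y : y \in T -> T = take (index y T) T ++ y :: drop (index y T).+1 T.
Proof.
move=> yT; rewrite -{1}(cat_take_drop (index y T) T) (drop_nth y) ?index_mem //.
by rewrite nth_index.
Qed.

Lemma notin_P n (T : seq 'I_n) y : uniq T -> y \in T -> y \notin take (index y T) T.
Proof.
move=> uT yT; move: uT; rewrite {1}(split_at yT) cat_uniq => /and3P [_ h _].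
by apply/negP => hy; move: h; rewrite /= hy.
Qed.

Lemma idx_P n (T : seq 'I_n) y z : uniq T -> y \in T -> z \in take (index y T) T -> index z T < index y T.
Proof.
move=> uT yT zP; rewrite {1}(split_at yT) index_cat zP.
have := index_mem z (take (index y T) T); rewrite zP size_takel // index_size.
by [].
Qed.

Lemma idx_Q n (T : seq 'I_n) y z : uniq T -> y \in T -> z \in drop (index y T).+1 T -> index y T < index z T.
Proof.
move=> uT yT zQ.
have := uT; rewrite {1}(split_at yT) cat_uniq => /and3P [_ h u2].
have zP : z \notin take (index y T) T.
  by apply/negP => zP; move: h => /hasPn /(_ z); rewrite inE zQ orbT zP => /(_ isT).
have yz : (y == z) = false.
  by apply/negP => /eqP e; subst z; move: u2 => /= /andP [/negP].
rewrite [in X in _ < X](split_at yT) index_cat (negbTE zP) size_takel ?index_size //= yz.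
by rewrite addnS ltnS leq_addr.
Qed.

Lemma disl_seq n (T : seq 'I_n) (y : 'I_n) : uniq T -> y \in T ->
  dislocation y T <= maxn (count (fun z : 'I_n => y < z) (take (index y T) T))
                          (count (fun z : 'I_n => z < y) (drop (index y T).+1 T)).
Proof.
move=> uT yT.
have yP := notin_P uT yT.
set P := take _ T; set Q := drop _ T.
have cT : count (fun z : 'I_n => z < y) T = count (fun z : 'I_n => z < y) P + count (fun z : 'I_n => z < y) Q.
  by rewrite {1}(split_at yT) count_cat /= ltnn add0n.
have hs : index y T = count (fun z : 'I_n => z < y) P + count (fun z : 'I_n => y < z) P.
  have -> : index y T = size P by rewrite size_takel ?index_size.
  rewrite -(count_predC (fun z : 'I_n => z < y) P).
  congr (_ + _); apply: eq_in_count => z zP /=.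
  rewrite -leqNgt leq_eqVlt.
  have : (val y == val z) = false.
    apply/negP => /eqP e; have ez : z = y by apply: val_inj.
    by rewrite ez in zP; rewrite zP in yP.
  by move=> ->.
rewrite /dislocation /Defs.pos /Defs.rank cT hs /absdiff !subSS.
exact: absdiff_cat.
Qed.

Lemma c_A n (T A : seq 'I_n) a : uniq T -> [seq y <- T | y \in A] = A -> a \in A -> a \in T ->
  count (fun y => y \in A) (take (index a T) T) = index a A.
Proof.
move=> uT HF aA aT.
have aP := notin_P uT aT.
have := HF; rewrite {1}(split_at aT) filter_cat /= aA => eA.
rewrite -{2}eA index_cat mem_filter (negbTE aP) andbF /= eqxx addn0.
by rewrite size_filter.
Qed.

Lemma det n (As Bs : {set 'I_n}) W L Dn (A T : seq 'I_n) (r : 'I_n -> nat) :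
  [disjoint As & Bs] -> goodb W L (As, Bs) -> 0 < L -> Dn.*2 <= W ->
  perm_eq A (enum As) -> is_insertion A Bs r T ->
  (forall a, a \in As -> index a A <= rho As a + Dn /\ rho As a <= index a A + Dn) ->
  (forall x, x \in Bs -> (r x).-1 <= rho As x + Dn /\ rho As x <= (r x).-1 + Dn) ->
  disl T <= W.+1 + L.-1.
Proof.
move=> dj Hg L0 hW pA [pT HF HB] HAc HBc.
have uA : uniq A by rewrite (perm_uniq pA) enum_uniq.
have memA : A =i As by move=> x; rewrite (perm_mem pA) mem_enum.
have uT : uniq T.
  rewrite (perm_uniq pT) cat_uniq uA enum_uniq andbT /=.
  apply/hasPn => x; rewrite mem_enum => xB; by rewrite memA (disjointFl dj xB).
have memT : forall z, (z \in T) = (z \in As) || (z \in Bs).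
  by move=> z; rewrite (perm_mem pT) mem_cat memA mem_enum.
pose c z := count (fun y => y \in A) (take (index z T) T).
have F1 : forall z, z \in T -> c z <= rho As z + Dn /\ rho As z <= c z + Dn.
  move=> z zT; move: (zT); rewrite memT => /orP [zA|zB].
    by rewrite /c c_A // ?memA //; apply: HAc.
  by rewrite /c HB //; apply: HBc.
have cm : forall z y, index z T <= index y T -> c z <= c y.
  by move=> z y h; apply: count_take_mono.
rewrite /disl; apply/bigmax_leqP_seq => y yT _.
apply: leq_trans (disl_seq uT yT) _; rewrite geq_max; apply/andP; split.
- rewrite count_card ?take_uniq //.
  apply: leq_trans (window (rho As y) dj Hg L0).
  apply: subset_leq_card; apply/subsetP => z; rewrite !inE => /andP [zP yz].
  have zT : z \in T := mem_take zP.
  have hc := cm _ _ (ltnW (idx_P uT yT zP)).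
  have [_ h1] := F1 z zT; have [h2 _] := F1 y yT.
  rewrite -memT zT /= (rho_mono As (ltnW yz)) /=. rewrite /c in hc h1 h2. lia.
- rewrite count_card ?drop_uniq //.
  apply: leq_trans (window (rho As y - W) dj Hg L0).
  apply: subset_leq_card; apply/subsetP => z; rewrite !inE => /andP [zQ zy].
  have zT : z \in T := mem_drop zQ.
  have hc := cm _ _ (ltnW (idx_Q uT yT zQ)).
  have [h1 _] := F1 z zT; have [_ h2] := F1 y yT.
  have hr := rho_mono As (ltnW zy).
  rewrite -memT zT /=. rewrite /c in hc h1 h2. apply/andP; split; lia.
Qed.

Local Open Scope R_scope.

Lemma int_floor (x : R) : (0 <= x)%R -> exists D : nat, (INR D <= x)%R /\ (x < INR D + 1)%R.
Proof.
move=> x0; have [h1 h2] := base_Int_part x.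
have hz : (0 <= Int_part x)%Z.
  have : (-1 < IZR (Int_part x))%R by lra.
  move=> h; have : (-1 < Int_part x)%Z by apply: lt_IZR.
  lia.
exists (Z.to_nat (Int_part x)); rewrite INR_IZR_INZ Z2Nat.id //; lra.
Qed.

Lemma INR_muln (a b : nat) : INR (a * b)%N = INR a * INR b.
Proof. by rewrite -mult_INR. Qed.

Lemma INR_addn (a b : nat) : INR (a + b)%N = INR a + INR b.
Proof. by rewrite -plus_INR. Qed.

Lemma INR_expn (a b : nat) : INR (a ^ b)%N = INR a ^ b.
Proof. elim: b => [|b IH]; first by rewrite expn0. by rewrite expnS INR_muln IH. Qed.

Lemma nat_of_R_lt (a b : nat) : (INR a < INR b + 1)%R -> (a <= b)%N.
Proof.
move=> h; have : (INR a < INR (b.+1))%R by rewrite S_INR.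
by move/INR_lt => /ltP.
Qed.

Theorem lemma3p3 :
  forall alpha : R, (2 <= alpha) ->
  exists C : R, (0 < C) /\
  forall n m k d : nat,
    (64 <= m)%N -> (sqrt (INR n) <= INR m) ->
    (k <= m)%N -> (m + k <= n)%N ->
    (log2 (INR n) <= INR d) ->
    (INR d <= sqrt (INR n) / (2160 * alpha)) ->
    exists Good : {set {set 'I_n} * {set 'I_n}},
      [/\ Good \subset Omega n m k,
          (forall p, p \in Good -> good_event alpha m d p.1 p.2) &
          ((1 - C / INR n ^ 3) * INR #|Omega n m k| <= INR #|Good|)].
Proof.
move=> alpha Ha; exists 1; split; first lra.
move=> n m k d H64 _ Hkm Hmk Hlog _.
have n64 : (64 <= n)%N by lia.
have Hn0 : 0 < INR n by apply: lt_0_INR; apply/ltP; lia.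
have ln2 : 0 < ln 2 by have := ln_lt_2; lra.
have n2d : (n <= 2 ^ d)%N.
  have h : ln (INR n) <= ln (INR (2 ^ d)).
    rewrite INR_expn ln_pow /=; last lra.
    rewrite /log2 in Hlog.
    have := Rmult_le_compat_r (ln 2) _ _ (Rlt_le _ _ ln2) Hlog.
    by rewrite /Rdiv Rmult_assoc Rinv_l ?Rmult_1_r //; lra.
  have : INR n <= INR (2 ^ d).
    apply: Rnot_lt_le => h'; have := ln_increasing _ _ _ h'.
    rewrite INR_expn; have : 0 < INR 2 ^ d by apply: pow_lt; rewrite /=; lra.
    rewrite INR_expn in h; move=> hp /(_ hp); lra.
  by move=> h2; apply/leP; apply: INR_le.
have d1 : (1 <= d)%N.
  case: d n2d {Hlog} => [|d'] //; rewrite expn0; lia.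
have hx0 : 0 <= alpha * INR d by apply: Rmult_le_pos; [lra | apply: pos_INR].
have [Dn [hD1 hD2]] := int_floor hx0.
have d2 : (d.*2 <= Dn)%N.
  apply: nat_of_R_lt; rewrite -mul2n INR_muln /=.
  have : 2 * INR d <= alpha * INR d by apply: Rmult_le_compat_r; [apply: pos_INR | lra].
  lra.
pose W := Dn.*2; pose L := (7 * W)%N.
have L0 : (0 < L)%N by rewrite /L /W; lia.
exists [set p in Omega n m k | goodb W L p]; split.
- by apply/subsetP => p; rewrite inE => /andP [].
- move=> [As Bs]; rewrite inE /= => /andP [Hom Hg].
  have [cA cB dj] := inOmega Hom.
  move=> A r T pA hdA hr hins.
  have memA : A =i As by move=> x; rewrite (perm_mem pA) mem_enum.
  have uA : uniq A by rewrite (perm_uniq pA) enum_uniq.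
  have crho : forall z : 'I_n, count (fun y : 'I_n => (y < z)%N) A = rho As z.
    move=> z; rewrite count_card // /rho; apply: eq_card => y; rewrite !inE memA //.
  have HAc : forall a, a \in As -> (index a A <= rho As a + Dn)%N /\ (rho As a <= index a A + Dn)%N.
    move=> a aA.
    have aA' : a \in A by rewrite memA.
    have h := @leq_bigmax_seq _ A predT (fun y => dislocation y A) a aA' isT.
    have h2 : (dislocation a A <= Dn)%N.
      apply: leq_trans h _; apply: leq_trans hdA _; lia.
    move: h2; rewrite /dislocation /Defs.pos /Defs.rank crho /absdiff; set i := index a A; set j := rho As a; move=> hh; clearbody i j; clear -hh; split; lia.
  have HBc : forall x, x \in Bs -> ((r x).-1 <= rho As x + Dn)%N /\ (rho As x <= (r x).-1 + Dn)%N.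
    move=> x xB; have [/andP [r1 _] hR] := hr x xB.
    rewrite /Defs.rank crho in hR.
    have h1 := Rle_trans _ _ _ (Rle_abs _) hR.
    have h2 := Rle_trans _ _ _ (Rle_abs _) (Rle_trans _ _ _ (Req_le _ _ (Rabs_Ropp _)) hR).
    have e1 : (r x <= (rho As x).+1 + Dn)%N.
      apply: nat_of_R_lt; rewrite INR_addn; lra.
    have e2 : ((rho As x).+1 <= r x + Dn)%N.
      apply: nat_of_R_lt; rewrite INR_addn; lra.
    lia.
  have hd := det dj Hg L0 (leqnn _) pA hins HAc HBc.
  have hd' : (disl T <= 16 * Dn)%N by move: hd; rewrite /L /W; lia.
  apply: Rle_trans (_ : INR (16 * Dn) <= _); first by apply: le_INR; apply/leP.
  rewrite INR_muln /=.
  have : 0 <= alpha * INR d by [].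
  lra.
- have Hnum : (n ^ 5 * ('C(W + L, L) * 'C(m + k - L, m)) <= 'C(m + k, m))%N.
    have h5 : (n ^ 5 <= 2 ^ (2 * W))%N.
      apply: leq_trans (expn_mono 5 n2d) _.
      rewrite -expnM; apply: leq_pexp2l => //; rewrite /W; lia.
    apply: leq_trans (bin_halves L (m:=m) _ _) => //; last by lia.
      2: by lia.
    rewrite mulnA; apply: leq_mul => //.
    apply: leq_trans (leq_mul h5 (bin_8W W)) _.
    by rewrite -expnD /L; apply: leq_pexp2l => //; lia.
  have hb := bad_bound (n:=n) (m:=m) (k:=k) (W:=W) (L:=L) _ _ L0 Hnum.
  set O := Omega n m k in hb *.
  set G := [set p in O | goodb W L p].
  set B := [set p in O | ~~ goodb W L p] in hb.
  have eGB : (#|G| + #|B| = #|O|)%N.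
    have e1 : G = O :&: [set p | goodb W L p] by apply/setP => p; rewrite !inE.
    have e2 : B = O :\: [set p | goodb W L p] by apply/setP => p; rewrite !inE andbC.
    by rewrite e1 e2 cardsID.
  have hb' : (INR n ^ 3 * INR #|B| <= INR #|O|).
    rewrite -INR_expn -INR_muln; apply: le_INR; apply/leP; apply: hb; lia.
  have eG : INR #|G| = INR #|O| - INR #|B| by rewrite -eGB INR_addn; ring.
  rewrite eG.
  have hn3 : 0 < INR n ^ 3 by apply: pow_lt.
  have : INR #|B| <= INR #|O| / INR n ^ 3.
    apply: (Rmult_le_reg_l (INR n ^ 3)) => //.
    have -> : INR n ^ 3 * (INR #|O| / INR n ^ 3) = INR #|O| by field; lra.
    exact: hb'.
  move=> hB.
  have -> : (1 - 1 / INR n ^ 3) * INR #|O| = INR #|O| - INR #|O| / INR n ^ 3 by field; lra.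
  lra.
Qed.
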